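(* The critical push-pull network (i.e. the push-pull network with $\lambda_1=\mu_1$ and $\lambda_2=\mu_2$) is non-stabilizable: there is no deterministic stationary non-idling policy under which the associated Markov jump process has a positive recurrent class that is entered with probability $1$.
   Context: The push-pull network has two servers and two job streams $i=1,2$, with strictly positive rates $\lambda_1,\lambda_2,\mu_1,\mu_2$. The state is $(x_1,x_2)\in\mathcal{S}=\mathbb{Z}_+^2$, where $x_i$ is the number of jobs in queue $i$. Server 1 can either ''push'' on stream 1 (an operation completing at exponential rate $\lambda_1$ and adding one job to queue 1) or ''pull'' from queue 2 (completing at exponential rate $\mu_2$ and removing one job from queue 2; allowed only if $x_2>0$). Server 2 can either ''push'' on stream 2 (rate $\lambda_2$, adds a job to queue 2) or ''pull'' from queue 1 (rate $\mu_1$, removes a job from queue 1; allowed only if $x_1>0$). Pushing is always possible. Operation durations are exponential, preemption is allowed, and durations are not known at commencement. A (deterministic, stationary) non-idling policy is a function $\mathcal{P}:\mathcal{S}\to\{\text{push},\text{pull}\}^2$ giving the actions of (server 1, server 2), with $\mathcal{P}((x,0))\in\{\text{push}\}\times\{\text{push},\text{pull}\}$ and $\mathcal{P}((0,x))\in\{\text{push},\text{pull}\}\times\{\text{push}\}$ for all integers $x\ge 0$. Given $\mathcal{P}$, in state $(x_1,x_2)$ the two active operations run simultaneously at their respective exponential rates and the state jumps according to whichever completes first; this defines a Markov jump process on $\mathcal{S}$. The network controlled by $\mathcal{P}$ is stable if this Markov jump process has a positive recurrent class which the process enters with probability 1; the network is stabilizable if some non-idling policy makes it stable, and non-stabilizable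 otherwise. *)

(* Defs.v *)
From Stdlib Require Import Reals Relations ClassicalDescription.
Open Scope R_scope.

Inductive action := Push | Pull.

Definition state := (nat * nat)%type.

Record network := mkNet { lam1 : R; lam2 : R; mu1 : R; mu2 : R }.

Definition policy := state -> action * action.

(** Non-idling: server 1 cannot pull from an empty queue 2,
    server 2 cannot pull from an empty queue 1. *)
Definition non_idling (P : policy) : Prop :=
  forall x : nat, fst (P (x, 0%nat)) = Push /\ snd (P (0%nat, x)) = Push.

Definition target1 (P : policy) (x : state) : state :=
  match fst (P x) with
  | Push => (S (fst x), snd x)
  | Pull => (fst x, Nat.pred (snd x))
  end.
Definition rate1 (N : network) (P : policy) (x : state) : R :=
  match fst (P x) with Push => lam1 N | Pull => mu2 N end.

Definition target2 (P : policy) (x : state) : state :=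
  match snd (P x) with
  | Push => (fst x, S (snd x))
  | Pull => (Nat.pred (fst x), snd x)
  end.
Definition rate2 (N : network) (P : policy) (x : state) : R :=
  match snd (P x) with Push => lam2 N | Pull => mu1 N end.

(** Total jump rate out of x, and jump-chain transition probabilities
    (the two targets are always distinct states different from x). *)
Definition qout (N : network) (P : policy) (x : state) : R :=
  rate1 N P x + rate2 N P x.
Definition p1 N P x := rate1 N P x / qout N P x.
Definition p2 N P x := rate2 N P x / qout N P x.

Definition step (P : policy) (x y : state) : Prop :=
  y = target1 P x \/ y = target2 P x.
Definition leads (P : policy) : relation state := clos_refl_trans state (step P).
Definition comm_class (P : policy) (x : state) : state -> Prop :=
  fun y => leads P x y /\ leads P y x.

Fixpoint hit_within (N : network) (P : policy) (C : state -> Prop)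
    (n : nat) (y : state) : R :=
  if excluded_middle_informative (C y) then 1 else
  match n with
  | O => 0
  | S n' => p1 N P y * hit_within N P C n' (target1 P y)
          + p2 N P y * hit_within N P C n' (target2 P y)
  end.

Definition enters_as (N : network) (P : policy) (C : state -> Prop) (y : state) : Prop :=
  Un_cv (fun n => hit_within N P C n y) 1.

Definition state_eqb (a b : state) : bool :=
  Nat.eqb (fst a) (fst b) && Nat.eqb (snd a) (snd b).

(** ret_trunc N P x n y = E_y[ sum_{k < min(n, tau_x)} 1 / q(Y_k) ],
    where Y is the jump chain and tau_x the first jump index >= 1 at which
    Y visits x: the expected time (of the jump process) spent before
    returning to x, truncated at n jumps. *)
Fixpoint ret_trunc (N : network) (P : policy) (x : state)
    (n : nat) (y : state) : R :=
  match n with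
  | O => 0
  | S n' => / qout N P y
      + (if state_eqb (target1 P y) x then 0
         else p1 N P y * ret_trunc N P x n' (target1 P y))
      + (if state_eqb (target2 P y) x then 0
         else p2 N P y * ret_trunc N P x n' (target2 P y))
  end.

(** x is positive recurrent: the expected return time to x,
    lim_n ret_trunc N P x n x (a nondecreasing limit), is finite. *)
Definition positive_recurrent (N : network) (P : policy) (x : state) : Prop :=
  exists M : R, forall n : nat, ret_trunc N P x n x <= M.

Definition stable (N : network) (P : policy) : Prop :=
  exists x : state,
    (forall y, comm_class P x y -> positive_recurrent N P y) /\
    (forall y, enters_as N P (comm_class P x) y).

Definition stabilizable (N : network) : Prop :=
  exists P : policy, non_idling P /\ stable N P.

(* Main.v *)
Require Import Defs.
From Stdlib Require Import Reals Lra Lia FunctionalExtensionality Relations.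
Open Scope R_scope.

Lemma state_eqb_true a b : state_eqb a b = true -> a = b.
Proof.
  destruct a as [a1 a2], b as [b1 b2]; unfold state_eqb; simpl.
  intro H; apply andb_prop in H; destruct H as [H1 H2].
  apply Nat.eqb_eq in H1; apply Nat.eqb_eq in H2; subst; reflexivity.
Qed.

Definition K N P x (g : state -> R) (y : state) : R :=
  (if state_eqb (target1 P y) x then 0 else p1 N P y * g (target1 P y))
  + (if state_eqb (target2 P y) x then 0 else p2 N P y * g (target2 P y)).

Fixpoint Kn N P x (n : nat) (g : state -> R) (y : state) : R :=
  match n with O => g y | S n' => K N P x (Kn N P x n' g) y end.

Fixpoint Vsum N P x (h : state -> R) (n : nat) (y : state) : R :=
  match n with O => 0 | S n' => h y + K N P x (Vsum N P x h n') y end.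

Lemma K_ext N P x g h y : (forall z, g z = h z) -> K N P x g y = K N P x h y.
Proof. intro H; unfold K; rewrite !H; reflexivity. Qed.

Lemma K_add N P x g h y :
  K N P x (fun z => g z + h z) y = K N P x g y + K N P x h y.
Proof. unfold K; destruct state_eqb, state_eqb; ring. Qed.

Lemma K_scal N P x a g y :
  K N P x (fun z => a * g z) y = a * K N P x g y.
Proof. unfold K; destruct state_eqb, state_eqb; ring. Qed.

Lemma K_mono_loc N P x g h y :
  0 <= p1 N P y -> 0 <= p2 N P y ->
  g (target1 P y) <= h (target1 P y) -> g (target2 P y) <= h (target2 P y) ->
  K N P x g y <= K N P x h y.
Proof.
  intros h1 h2 e1 e2; unfold K; destruct state_eqb, state_eqb;
  try apply Rplus_le_compat; try lra; apply Rmult_le_compat_l; auto.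
Qed.

Section Gen.
Context (N : network) (P : policy) (x : state)
  (hp : forall y, 0 <= p1 N P y /\ 0 <= p2 N P y).

Lemma K_mono g h y : (forall z, g z <= h z) -> K N P x g y <= K N P x h y.
Proof. intro H; destruct (hp y); apply K_mono_loc; auto. Qed.

Lemma Kn_ext n : forall g h y, (forall z, g z = h z) -> Kn N P x n g y = Kn N P x n h y.
Proof.
  induction n; intros g h y H; simpl; auto.
  apply K_ext; intro; auto.
Qed.

Lemma Kn_add n : forall g h y,
  Kn N P x n (fun z => g z + h z) y = Kn N P x n g y + Kn N P x n h y.
Proof.
  induction n; intros g h y; simpl; auto.
  rewrite <- K_add; apply K_ext; auto.
Qed.

Lemma Kn_scal n : forall a g y,
  Kn N P x n (fun z => a * g z) y = a * Kn N P x n g y.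
Proof.
  induction n; intros a g y; simpl; auto.
  rewrite <- K_scal; apply K_ext; auto.
Qed.

Lemma Kn_mono n : forall g h y, (forall z, g z <= h z) -> Kn N P x n g y <= Kn N P x n h y.
Proof.
  induction n; intros g h y H; simpl; auto.
  apply K_mono; auto.
Qed.

Lemma Kn_nonneg n g y : (forall z, 0 <= g z) -> 0 <= Kn N P x n g y.
Proof.
  intro H. assert (E : Kn N P x n (fun z => 0 * g z) y = 0) by (rewrite Kn_scal; ring).
  rewrite <- E; apply Kn_mono; intro z; specialize (H z); lra.
Qed.

Lemma Kn_comp m : forall k g y, Kn N P x m (Kn N P x k g) y = Kn N P x (m + k) g y.
Proof.
  induction m; intros k g y; simpl; auto.
  apply K_ext; auto.
Qed.

Lemma Vsum_split m : forall k h y,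
  Vsum N P x h (m + k) y = Vsum N P x h m y + Kn N P x m (Vsum N P x h k) y.
Proof.
  induction m; intros k h y; simpl. lra.
  rewrite (K_ext _ _ _ _ (fun z => Vsum N P x h m z + Kn N P x m (Vsum N P x h k) z)).
  rewrite K_add; ring. intro; auto.
Qed.

Lemma Vsum_mono n : forall g h y, (forall z, g z <= h z) -> Vsum N P x g n y <= Vsum N P x h n y.
Proof.
  induction n; intros g h y H; simpl. lra.
  apply Rplus_le_compat; auto. apply K_mono; auto.
Qed.

Lemma Vsum_scal n : forall a g y, Vsum N P x (fun z => a * g z) n y = a * Vsum N P x g n y.
Proof.
  induction n; intros a g y; simpl. ring.
  rewrite (K_ext _ _ _ _ (fun z => a * Vsum N P x g n z)) by auto.
  rewrite K_scal; ring.
Qed.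

Lemma Vsum_S n h y : Vsum N P x h (S n) y = Vsum N P x h n y + Kn N P x n h y.
Proof.
  rewrite <- Nat.add_1_r, Vsum_split. f_equal. apply Kn_ext.
  intro z; simpl. unfold K; destruct state_eqb, state_eqb; ring.
Qed.

End Gen.

Lemma ret_Vsum N P x n : forall y,
  ret_trunc N P x n y = Vsum N P x (fun z => / qout N P z) n y.
Proof.
  induction n; intro y; simpl; auto.
  unfold K; rewrite !IHn; ring.
Qed.

Definition fpot (N : network) (y : state) : R :=
  INR (fst y) / lam1 N - INR (snd y) / lam2 N.

Lemma loc (l1 l2 : R) (P : policy) : 0 < l1 -> 0 < l2 -> non_idling P ->
  forall y, let N := mkNet l1 l2 l1 l2 in
  (rate1 N P y = l1 \/ rate1 N P y = l2) /\ (rate2 N P y = l1 \/ rate2 N P y = l2) /\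
  fpot N (target1 P y) = fpot N y + / rate1 N P y /\
  fpot N (target2 P y) = fpot N y - / rate2 N P y.
Proof.
  intros h1 h2 hni [y1 y2] N; subst N.
  unfold rate1, rate2, target1, target2, fpot; cbn [fst snd lam1 lam2 mu1 mu2].
  destruct (P (y1, y2)) as [a b] eqn:E; cbn [fst snd lam1 lam2 mu1 mu2].
  split; [destruct a; cbn [fst snd lam1 lam2 mu1 mu2]; auto|].
  split; [destruct b; cbn [fst snd lam1 lam2 mu1 mu2]; auto|].
  split.
  - destruct a; cbn [fst snd lam1 lam2 mu1 mu2].
    + rewrite S_INR; field; lra.
    + destruct y2 as [|k].
      * destruct (hni y1) as [H _]; rewrite E in H; simpl in H; discriminate.
      * cbn [Nat.pred]. rewrite S_INR; field; lra.
  - destruct b; cbn [fst snd lam1 lam2 mu1 mu2].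
    + rewrite S_INR; field; lra.
    + destruct y1 as [|k].
      * destruct (hni y2) as [_ H]; rewrite E in H; simpl in H; discriminate.
      * cbn [Nat.pred]. rewrite S_INR; field; lra.
Qed.

Section Main.
Context (l1 l2 : R) (hl1 : 0 < l1) (hl2 : 0 < l2) (P : policy) (hni : non_idling P).
Local Notation NN := (mkNet l1 l2 l1 l2).
Local Notation f := (fpot NN).
Local Notation t1 := (target1 P).
Local Notation t2 := (target2 P).

Lemma rpos y : 0 < rate1 NN P y /\ 0 < rate2 NN P y /\
   / rate1 NN P y <= / l1 + / l2 /\ / rate2 NN P y <= / l1 + / l2.
Proof.
  destruct (loc l1 l2 P hl1 hl2 hni y) as [A [B _]].
  assert (0 < / l1) by (apply Rinv_0_lt_compat; auto).
  assert (0 < / l2) by (apply Rinv_0_lt_compat; auto).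
  destruct A as [A|A], B as [B|B]; rewrite A, B; repeat split; lra.
Qed.

Lemma p1E y : p1 NN P y = rate1 NN P y / (rate1 NN P y + rate2 NN P y).
Proof. reflexivity. Qed.
Lemma p2E y : p2 NN P y = rate2 NN P y / (rate1 NN P y + rate2 NN P y).
Proof. reflexivity. Qed.

Lemma probs y : 0 <= p1 NN P y /\ 0 <= p2 NN P y /\ p1 NN P y + p2 NN P y = 1.
Proof.
  destruct (rpos y) as [a [b _]]. rewrite p1E, p2E.
  assert (0 < / (rate1 NN P y + rate2 NN P y)) by (apply Rinv_0_lt_compat; lra).
  unfold Rdiv; repeat split.
  - apply Rmult_le_pos; lra.
  - apply Rmult_le_pos; lra.
  - field; lra.
Qed.

Lemma hp : forall y, 0 <= p1 NN P y /\ 0 <= p2 NN P y.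
Proof. intro y; destruct (probs y) as [a [b _]]; auto. Qed.

Definition D (y : state) : R :=
  p1 NN P y * (f (t1 y) - f y) ^ 2 + p2 NN P y * (f (t2 y) - f y) ^ 2.

Lemma DE y : D y = (/ rate1 NN P y + / rate2 NN P y) * / (rate1 NN P y + rate2 NN P y).
Proof.
  destruct (loc l1 l2 P hl1 hl2 hni y) as [_ [_ [E1 E2]]].
  destruct (rpos y) as [a [b _]].
  unfold D; rewrite E1, E2, p1E, p2E. field; lra.
Qed.

Lemma alg y u : p1 NN P y * (f (t1 y) - f y + u) ^ 2 + p2 NN P y * (f (t2 y) - f y + u) ^ 2
   = u ^ 2 + D y.
Proof.
  unfold D.
  destruct (loc l1 l2 P hl1 hl2 hni y) as [_ [_ [E1 E2]]].
  destruct (rpos y) as [a [b _]].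
  rewrite E1, E2, p1E, p2E. field; lra.
Qed.

Variable x : state.

Fixpoint W (a : R) (k : nat) (y : state) : R :=
  match k with
  | O => (f y - a) ^ 2
  | S k' => (if state_eqb (t1 y) x then p1 NN P y * (f x - a) ^ 2
             else p1 NN P y * W a k' (t1 y))
          + (if state_eqb (t2 y) x then p2 NN P y * (f x - a) ^ 2
             else p2 NN P y * W a k' (t2 y))
  end.

Lemma W_eq a k : forall y, W a k y = (f y - a) ^ 2 + Vsum NN P x D k y.
Proof.
  induction k; intro y; simpl W; simpl Vsum. ring.
  assert (G : forall t p, (if state_eqb t x then p * (f x - a) ^ 2 else p * W a k t)
     = p * (f t - a) ^ 2 + (if state_eqb t x then 0 else p * Vsum NN P x D k t)).
  { intros t p; destruct (state_eqb t x) eqn:E.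
    - apply state_eqb_true in E; subst; ring.
    - rewrite IHk; ring. }
  rewrite !G. unfold K.
  pose proof (alg y (f y - a)) as Al.
  replace (f (t1 y) - f y + (f y - a)) with (f (t1 y) - a) in Al by ring.
  replace (f (t2 y) - f y + (f y - a)) with (f (t2 y) - a) in Al by ring.
  lra.
Qed.

Lemma W_lb a k : forall y, (f x - a) ^ 2 * (1 - Kn NN P x k (fun _ => 1) y) <= W a k y.
Proof.
  induction k; intro y; simpl W; simpl Kn.
  - replace (1 - 1) with 0 by ring. rewrite Rmult_0_r. apply pow2_ge_0.
  - destruct (probs y) as [q1 [q2 q3]]. unfold K.
    assert (C : 0 <= (f x - a) ^ 2) by apply pow2_ge_0.
    pose proof (IHk (t1 y)) as I1. pose proof (IHk (t2 y)) as I2.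
    set (c := (f x - a) ^ 2) in *.
    set (R1 := Kn NN P x k (fun _ => 1) (t1 y)) in *.
    set (R2 := Kn NN P x k (fun _ => 1) (t2 y)) in *.
    set (w1 := W a k (t1 y)) in *. set (w2 := W a k (t2 y)) in *.
    assert (M1 : p1 NN P y * (c * (1 - R1)) <= p1 NN P y * w1) by (apply Rmult_le_compat_l; auto).
    assert (M2 : p2 NN P y * (c * (1 - R2)) <= p2 NN P y * w2) by (apply Rmult_le_compat_l; auto).
    assert (Hc : p1 NN P y * c + p2 NN P y * c = c) by (rewrite <- Rmult_plus_distr_r, q3; ring).
    change ((f x - a) * ((f x - a) * 1)) with c.
    destruct (state_eqb (t1 y) x), (state_eqb (t2 y) x); nra.
Qed.

Lemma W_K k : forall y, W (f x) k y = Kn NN P x k (fun z => (f z - f x) ^ 2) y.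
Proof.
  induction k; intro y; cbn -[pow fpot K]; auto.
  unfold K; rewrite !IHk.
  destruct (state_eqb (t1 y) x), (state_eqb (t2 y) x); ring.
Qed.

Lemma Q_lb k z : (f z - f x) ^ 2 * (1 - Kn NN P x k (fun _ => 1) z) <= Vsum NN P x D k z.
Proof.
  pose proof (W_lb (f z) k z) as H. rewrite W_eq in H.
  replace ((f z - f z) ^ 2) with 0 in H by ring.
  replace ((f x - f z) ^ 2) with ((f z - f x) ^ 2) in H by ring. lra.
Qed.

Definition dl := / l1 + / l2.

Lemma bound g (hg : forall z, 0 <= g z) m : forall y c0 r, 0 <= r -> Rabs (f y - c0) <= r ->
  Kn NN P x m (fun z => (f z - c0) ^ 2 * g z) y <= (r + INR m * dl) ^ 2 * Kn NN P x m g y.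
Proof.
  induction m; intros y c0 r hr hy; cbn -[pow fpot K INR].
  - simpl INR. rewrite Rmult_0_l, Rplus_0_r.
    apply Rmult_le_compat_r; auto.
    rewrite <- (pow2_abs (f y - c0)). apply pow_incr. split; auto. apply Rabs_pos.
  - rewrite <- K_scal. destruct (hp y) as [q1 q2].
    destruct (loc l1 l2 P hl1 hl2 hni y) as [_ [_ [E1 E2]]].
    destruct (rpos y) as [a [b [c d]]].
    assert (hd : 0 <= dl) by (unfold dl; pose proof (Rinv_0_lt_compat _ hl1); pose proof (Rinv_0_lt_compat _ hl2); lra).
    apply K_mono_loc; auto.
    + replace (r + INR (S m) * dl) with ((r + dl) + INR m * dl) by (rewrite S_INR; ring).
      apply IHm. lra. rewrite E1.
      replace (f y + / rate1 NN P y - c0) with ((f y - c0) + / rate1 NN P y) by ring.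
      eapply Rle_trans. apply Rabs_triang. rewrite (Rabs_right (/ rate1 NN P y)).
      fold dl in c. lra. left; apply Rinv_0_lt_compat; auto.
    + replace (r + INR (S m) * dl) with ((r + dl) + INR m * dl) by (rewrite S_INR; ring).
      apply IHm. lra. rewrite E2.
      replace (f y - / rate2 NN P y - c0) with ((f y - c0) + - / rate2 NN P y) by ring.
      eapply Rle_trans. apply Rabs_triang. rewrite Rabs_Ropp, (Rabs_right (/ rate2 NN P y)).
      fold dl in d. lra. left; apply Rinv_0_lt_compat; auto.
Qed.

Lemma qE y : qout NN P y = rate1 NN P y + rate2 NN P y.
Proof. reflexivity. Qed.

Lemma D_le y : D y <= (2 * dl) * / qout NN P y.
Proof.
  rewrite DE, qE. destruct (rpos y) as [a [b [c d]]].
  apply Rmult_le_compat_r. left; apply Rinv_0_lt_compat; lra. unfold dl in *; lra.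
Qed.

Lemma D_pos y : 0 < D y.
Proof.
  rewrite DE. destruct (rpos y) as [a [b _]].
  apply Rmult_lt_0_compat. pose proof (Rinv_0_lt_compat _ a); pose proof (Rinv_0_lt_compat _ b); lra.
  apply Rinv_0_lt_compat; lra.
Qed.

Lemma one_le y : 1 <= (2 * (l1 + l2)) * / qout NN P y.
Proof.
  rewrite qE. destruct (rpos y) as [a [b _]].
  destruct (loc l1 l2 P hl1 hl2 hni y) as [A [B _]].
  assert (h : rate1 NN P y + rate2 NN P y <= 2 * (l1 + l2)) by
    (destruct A as [A|A], B as [B|B]; rewrite A, B; lra).
  rewrite <- (Rinv_r (rate1 NN P y + rate2 NN P y)) by lra.
  apply Rmult_le_compat_r. left; apply Rinv_0_lt_compat; lra. lra.
Qed.

Lemma R_dec n y : Kn NN P x (S n) (fun _ => 1) y <= Kn NN P x n (fun _ => 1) y.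
Proof.
  rewrite <- Nat.add_1_r, <- (Kn_comp NN P x n 1).
  apply (Kn_mono NN P x hp). intro z. simpl Kn.
  destruct (probs z) as [q1 [q2 q3]]. unfold K.
  destruct (state_eqb (t1 z) x), (state_eqb (t2 z) x); lra.
Qed.

Lemma R_nonneg n y : 0 <= Kn NN P x n (fun _ => 1) y.
Proof. apply (Kn_nonneg NN P x hp). intro; lra. Qed.

Lemma nR_le n : INR n * Kn NN P x n (fun _ => 1) x <= Vsum NN P x (fun _ => 1) n x.
Proof.
  induction n. simpl; lra.
  rewrite Vsum_S. rewrite S_INR.
  pose proof (R_dec n x). pose proof (R_nonneg (S n) x).
  assert (INR n * Kn NN P x (S n) (fun _ => 1) x <= INR n * Kn NN P x n (fun _ => 1) x)
    by (apply Rmult_le_compat_l; auto; apply pos_INR).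
  lra.
Qed.

Lemma key m k : 2 * Vsum NN P x D m x - (INR m * dl) ^ 2 * Kn NN P x (m + k) (fun _ => 1) x
   <= Vsum NN P x D (m + k) x.
Proof.
  rewrite (Vsum_split NN P x m k).
  assert (H1 : Kn NN P x m (fun z => (f z - f x) ^ 2 + (-1) * ((f z - f x) ^ 2 * Kn NN P x k (fun _ => 1) z)) x
     <= Kn NN P x m (Vsum NN P x D k) x).
  { apply (Kn_mono NN P x hp). intro z. pose proof (Q_lb k z). lra. }
  rewrite (Kn_add NN P x) , (Kn_scal NN P x) in H1.
  rewrite <- W_K, W_eq in H1. replace ((f x - f x) ^ 2) with 0 in H1 by ring.
  assert (H2 := bound (Kn NN P x k (fun _ => 1)) (fun z => R_nonneg k z) m x (f x) 0 (Rle_refl 0)).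
  rewrite Rminus_diag, Rabs_R0 in H2. specialize (H2 (Rle_refl 0)).
  rewrite Rplus_0_l, Kn_comp in H2. lra.
Qed.

Lemma not_pr M : ~ (forall n, ret_trunc NN P x n x <= M).
Proof.
  intro HM.
  set (A := fun n => Vsum NN P x D n x).
  assert (fa : forall n, A n <= 2 * dl * M).
  { intro n. unfold A. eapply Rle_trans.
    apply (Vsum_mono NN P x hp n D (fun z => (2 * dl) * / qout NN P z)). apply D_le.
    rewrite (Vsum_scal NN P x), <- ret_Vsum. apply Rmult_le_compat_l; auto.
    unfold dl; pose proof (Rinv_0_lt_compat _ hl1); pose proof (Rinv_0_lt_compat _ hl2); lra. }
  assert (fd : forall n, INR n * Kn NN P x n (fun _ => 1) x <= 2 * (l1 + l2) * M).
  { intro n. eapply Rle_trans. apply nR_le. eapply Rle_trans.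
    apply (Vsum_mono NN P x hp n (fun _ => 1) (fun z => (2 * (l1 + l2)) * / qout NN P z)). apply one_le.
    rewrite (Vsum_scal NN P x), <- ret_Vsum. apply Rmult_le_compat_l; auto. lra. }
  set (c := A 1%nat).
  assert (cpos : 0 < c).
  { unfold c, A. simpl Vsum. unfold K. pose proof (D_pos x).
    destruct (state_eqb (t1 x) x), (state_eqb (t2 x) x); lra. }
  assert (cl : forall j : nat, exists m, c + INR j * (c / 2) <= A m).
  { induction j.
    - exists 1%nat. change (INR 0) with 0. fold c. lra.
    - destruct IHj as [m Hm].
      set (E := (INR m * dl) ^ 2 * (2 * (l1 + l2) * M)).
      destruct (INR_archimed (c / 2) E) as [kk Hkk]. lra.
      exists (m + S kk)%nat.
      pose proof (key m (S kk)) as Hk. fold A in Hk |- *.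
      pose proof (fd (m + S kk)%nat) as Hf.
      set (Rn := Kn NN P x (m + S kk) (fun _ => 1) x) in *.
      assert (Rn0 : 0 <= Rn) by apply R_nonneg.
      assert (hn : INR kk <= INR (m + S kk)) by (apply le_INR; lia).
      assert (hn0 : 0 < INR (m + S kk)) by (apply lt_0_INR; lia).
      assert (sq : 0 <= (INR m * dl) ^ 2) by apply pow2_ge_0.
      assert (X1 : INR (m + S kk) * ((INR m * dl) ^ 2 * Rn) <= E).
      { unfold E. replace (INR (m + S kk) * ((INR m * dl) ^ 2 * Rn)) with
          ((INR m * dl) ^ 2 * (INR (m + S kk) * Rn)) by ring.
        apply Rmult_le_compat_l; auto. }
      assert (X2 : (INR m * dl) ^ 2 * Rn <= c / 2).
      { destruct (Rle_or_lt ((INR m * dl) ^ 2 * Rn) (c / 2)) as [h|h]; auto.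
        exfalso. assert (INR (m + S kk) * (c / 2) < INR (m + S kk) * ((INR m * dl) ^ 2 * Rn))
          by (apply Rmult_lt_compat_l; auto).
        assert (INR kk * (c / 2) <= INR (m + S kk) * (c / 2)) by (apply Rmult_le_compat_r; lra).
        lra. }
      change (Vsum NN P x D m x) with (A m) in Hk. change (Vsum NN P x D (m + S kk) x) with (A (m + S kk)%nat) in Hk.
      assert (0 <= INR j * (c / 2)) by (apply Rmult_le_pos; [apply pos_INR | lra]).
      rewrite S_INR. lra. }
  destruct (INR_archimed (c / 2) (2 * dl * M)) as [j Hj]. lra.
  destruct (cl j) as [m Hm]. pose proof (fa m). lra.
Qed.

End Main.

Theorem theorem1 (l1 l2 : R) (hl1 : 0 < l1) (hl2 : 0 < l2) :
  ~ stabilizable (mkNet l1 l2 l1 l2).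
Proof.
  intros [P [hni [x [Hpr _]]]].
  assert (Hc : comm_class P x x) by (split; apply rt_refl).
  destruct (Hpr x Hc) as [M HM].
  exact (not_pr l1 l2 hl1 hl2 P hni x M HM).
Qed.
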